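(* Let $\Omega\subset\mathbb R^d$ be bounded and convex, let $\sigma_a,\sigma_b$ be bounded positive functions on $\Omega$, and suppose there is no scattering ($\sigma_s\equiv 0$). Fix a direction $\mathbf v'\in\mathbb S^{d-1}$ and a point $\mathbf x\in\Omega$, set $\mathbf x':=\mathbf x-\tau_-(\mathbf x,\mathbf v')\mathbf v'\in\partial\Omega$, $\widetilde\sigma_a(s):=\sigma_a(\mathbf x'+s\mathbf v')$, $\widetilde\sigma_b(s):=\sigma_b(\mathbf x'+s\mathbf v')$. For $j=1,2$, let $u_j\ge 0$ be the solution of $\mathbf v\cdot\nabla u_j+\sigma_a u_j+\sigma_b\langle u_j\rangle u_j=0$ in $\Omega\times\mathbb S^{d-1}$ with collimated incoming boundary source $u_j=\mathfrak g_j(\mathbf x)\delta(\mathbf v-\mathbf v')$, and let $\phi_j(s):=\langle u_j\rangle(\mathbf x'+s\mathbf v')$, which satisfies \[ \phi_j(t)=\mathfrak g_j(\mathbf x')\exp\Big(-\int_0^t\big(\widetilde\sigma_a(s)+\widetilde\sigma_b(s)\phi_j(s)\big)ds\Big),\qquad t\in[0,\tau_-(\mathbf x,\mathbf v')]. \] If $\mathfrak g_1>\mathfrak g_2>0$, then $\phi_1(t)>\phi_2(t)$ for all $t\in[0,\tau_-(\mathbf x,\mathbf v')]$.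
   Context: $\mathbb S^{d-1}$ is the unit sphere with normalized surface measure $d\mathbf v$ and $\langle u\rangle(\mathbf x):=\int_{\mathbb S^{d-1}}u(\mathbf x,\mathbf v)d\mathbf v$. For $(\mathbf x,\mathbf v)\in\Omega\times\mathbb S^{d-1}$, $\tau_-(\mathbf x,\mathbf v):=\sup\{s\in\mathbb R:\mathbf x-s\mathbf v\in\Omega\}$. The boundary strengths $\mathfrak g_1,\mathfrak g_2$ are functions on $\partial\Omega$. *)

(* Defs.v *)
From HB Require Import structures.
From mathcomp Require Import all_boot all_order all_algebra.
From mathcomp Require Import all_classical all_reals all_analysis.
Set Implicit Arguments. Unset Strict Implicit. Unset Printing Implicit Defensive.
Import Order.TTheory GRing.Theory Num.Theory.
Import numFieldNormedType.Exports.
Local Open Scope classical_set_scope.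
Local Open Scope ring_scope.

Definition sqnorm (R : realType) (d : nat) (v : 'rV[R]_d) : R :=
  \sum_(i < d) (v ord0 i) ^+ 2.

Definition on_sphere (R : realType) (d : nat) (v : 'rV[R]_d) : Prop :=
  sqnorm v = 1.

Definition boundary (R : realType) (d : nat) (Om : set 'rV[R]_d) : set 'rV[R]_d :=
  closure Om `\` interior Om.

Definition tau_minus (R : realType) (d : nat) (Om : set 'rV[R]_d)
  (x v : 'rV[R]_d) : R := sup [set s : R | Om (x - s *: v)].

Definition bdd_pos_on (R : realType) (d : nat) (Om : set 'rV[R]_d)
  (f : 'rV[R]_d -> R) : Prop :=
  exists M : R, forall y, Om y -> 0 < f y <= M.

(* Main.v *)
Require Import Defs.
From HB Require Import structures.
From mathcomp Require Import all_boot all_order all_algebra.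
From mathcomp Require Import all_classical all_reals all_analysis.
From mathcomp Require Import ring lra measurable_realfun.
Import Order.TTheory GRing.Theory Num.Theory.
Import numFieldNormedType.Exports.
Local Open Scope classical_set_scope.
Local Open Scope ring_scope.


Module Helpers.
Section G.
Variables (R : realType) (d : nat) (Om : set 'rV[R]_d) (x v' : 'rV[R]_d).
Hypotheses (Hb : bounded_set Om) (Hc : convex_set Om) (Hv : on_sphere v') (Hx : Om x).

Let S := [set s : R | Om (x - s *: v')].

Lemma v'_neq0 : v' != 0.
Proof.
apply/negP => /eqP v0; move: Hv; rewrite /on_sphere /sqnorm v0.
rewrite big1 => [/esym/eqP|i _]; first by rewrite oner_eq0.
by rewrite mxE expr0n.
Qed.

Lemma S0 : S 0.
Proof. by rewrite /S /= scale0r subr0. Qed.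

Lemma S_ub : has_ubound S.
Proof.
case: Hb => M [Mr HM].
have H := HM (`|M| + 1) (le_lt_trans (real_ler_norm Mr) (ltr_pwDr ltr01 (lexx _))).

have vp : 0 < `|v'| by rewrite normr_gt0 v'_neq0.
exists ((`|x| + `|M| + 1) / `|v'|) => s Ss.
rewrite ler_pdivlMr //.
apply: (le_trans (ler_wpM2r (ltW vp) (ler_norm s))); rewrite -normrZ.
have -> : s *: v' = x - (x - s *: v') by rewrite opprB addrC subrK.
apply: (le_trans (ler_normB _ _)); rewrite -addrA lerD2l; exact: H.
Qed.

Lemma inner u : 0 <= u < sup S -> Om (x - u *: v').
Proof.
case/andP => u0 uT.
have [s Ss us] := sup_gt (ex_intro _ 0 S0) uT.
have s0 : 0 < s by apply: le_lt_trans us.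
have l0 : 0 <= 1 - u / s by rewrite subr_ge0 ler_pdivrMr // mul1r ltW.
have l1 : 1 - u / s <= 1 by rewrite lerBlDr lerDl divr_ge0 // ltW.
have := Hc _ _ (Itv01 l0 l1) (mem_set Hx) (mem_set Ss).
rewrite inE; congr Om => /=.
rewrite /conv /= /unstable.onem.
have -> : 1 - (1 - u/s) = u/s by rewrite opprB addrC subrK.
rewrite scalerBr scalerA divfK ?gt_eqF // scalerBl addrA subrK scale1r //.
Qed.

Lemma bnd : boundary Om (x - sup S *: v').
Proof.
have vp : 0 < `|v'| by rewrite normr_gt0 v'_neq0.
split.
  move=> B /nbhs_ballP [e e0 eB].
  have ev : 0 < e / (`|v'| + 1) by rewrite divr_gt0 // addr_gt0.
  have hlt : sup S - e / (`|v'| + 1) < sup S by rewrite ltrBlDr ltrDl.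
  have [s Ss hs] := sup_gt (ex_intro _ 0 S0) hlt.
  exists (x - s *: v'); split => //; apply: eB.
  rewrite -ball_normE /= opprB addrC addrA subrK -scalerBl normrZ.
  have sT : s <= sup S by apply: ub_le_sup => //; exact: S_ub.
  rewrite ler0_norm ?subr_le0 // opprB.
  have hs' : sup S - s <= e / (`|v'| + 1) by lra.
  apply: (le_lt_trans (ler_wpM2r (ltW vp) hs')).
  by rewrite mulrAC ltr_pdivrMr ?addr_gt0 // ltr_pM2l // ltrDl.
move=> /nbhs_ballP [e e0 eB].
set dl := e / (`|v'| + 1).
have dl0 : 0 < dl by rewrite divr_gt0 // addr_gt0.
have : S (sup S + dl).
  rewrite /S /=; have := eB (x - sup S *: v' - dl *: v').
  rewrite scalerDl opprD addrA; apply.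
  rewrite -ball_normE /= opprB addrC subrK normrZ gtr0_norm //.
  by rewrite /dl mulrAC ltr_pdivrMr ?addr_gt0 // ltr_pM2l // ltrDl.
move/(ub_le_sup S_ub); rewrite gerDl leNgt dl0 //.
Qed.
End G.
Set Implicit Arguments. Unset Strict Implicit.

Section An1.
Variables (R : realType) (T : R) (f : R -> R).
Local Notation mu := (@lebesgue_measure R).
Hypothesis If : mu.-integrable `[0, T] (fun s => (f s)%:E).

Lemma my_intS (A : set R) : measurable A -> A `<=` `[0, T] -> mu.-integrable A (EFin \o f).
Proof. by move=> mA AT; apply: integrableS If. Qed.

Lemma my_F0 : Rintegral mu `[0, 0] f = 0.
Proof. by rewrite set_itv1 Rintegral_set1. Qed.

Lemma my_Fsplit r t0 : 0 <= r -> r <= t0 -> t0 <= T ->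
  Rintegral mu `[0, t0] f - Rintegral mu `[0, r] f = Rintegral mu `]r, t0] f.
Proof.
move=> r0 rt tT; apply: Rintegral_itvB; rewrite ?bnd_simp //.
apply: my_intS => // s /=; rewrite !in_itv /= => /andP[s0 st].
by rewrite s0 (le_trans st tT).
Qed.

Lemma my_Fpos t : (forall s, 0 < s <= T -> 0 <= f s) -> 0 <= t <= T ->
  0 <= Rintegral mu `[0, t] f.
Proof.
move=> fp /andP[t0 tT].
rewrite -Rintegral_itv_obnd_cbnd; last first.
  apply: my_intS => // s /=; rewrite !in_itv /= => /andP[s0 st].
  by rewrite (ltW s0) (le_trans st tT).
apply: Rintegral_ge0 => s /=; rewrite in_itv /= => /andP[s0 st].
by apply: fp; rewrite s0 (le_trans st tT).
Qed.

Lemma my_Rint_le_cst (r t0 C : R) (h : R -> R) : r <= t0 ->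
  mu.-integrable `]r, t0] (EFin \o h) ->
  (forall s, r < s <= t0 -> h s <= C) ->
  Rintegral mu `]r, t0] h <= C * (t0 - r).
Proof.
move=> rt Ih hC.
have Ic : mu.-integrable `]r, t0] (EFin \o cst C).
  apply/integrableP; split; first exact/measurable_EFinP.
  rewrite (eq_integral (fun=> `|C|%:E)) ?integral_cst //= ?lebesgue_measure_itv /=.
  rewrite lte_fin; case: ifP => _; last by rewrite mule0 ltry.
  by rewrite -EFinD -EFinM ltry.
have hC' : forall s, [set` `]r, t0]] s -> h s <= cst C s.
  by move=> s /=; rewrite in_itv /= => /andP[? ?]; apply: hC; apply/andP.
apply: (le_trans (le_Rintegral _ Ih Ic hC')) => //.
rewrite Rintegral_cst //.
have := lebesgue_measure_itv `]r, t0]; rewrite /= lte_fin => ->.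
case: ifP => [_|]; first by [].
move/negbT; rewrite -leNgt => tr; have -> : t0 = r by apply/eqP; rewrite eq_le tr.
by rewrite subrr.
Qed.
End An1.

Section An2.
Variables (R : realType) (T Mb g1 g2 : R) (a b p1 p2 : R -> R).
Local Notation mu := (@lebesgue_measure R).
Let f1 s := a s + b s * p1 s.
Let f2 s := a s + b s * p2 s.
Hypotheses (T0 : 0 <= T) (g20 : 0 < g2) (g21 : g2 < g1) (Mb0 : 0 < Mb).
Hypothesis Hab : forall s, 0 < s <= T -> 0 < a s /\ 0 < b s <= Mb.
Hypothesis I1 : mu.-integrable `[0, T] (fun s => (a s + b s * p1 s)%:E).
Hypothesis I2 : mu.-integrable `[0, T] (fun s => (a s + b s * p2 s)%:E).
Hypothesis E1 : forall t, 0 <= t <= T -> p1 t = g1 *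
      expR (- Rintegral mu `[0, t] (fun s => a s + b s * p1 s)).
Hypothesis E2 : forall t, 0 <= t <= T -> p2 t = g2 *
      expR (- Rintegral mu `[0, t] (fun s => a s + b s * p2 s)).

Let F1 t := Rintegral mu `[0, t] f1.
Let F2 t := Rintegral mu `[0, t] f2.
Let g10 : 0 < g1. Proof. exact: lt_trans g21. Qed.

Let p1_pos t : 0 <= t <= T -> 0 < p1 t.
Proof. by move=> /E1 ->; rewrite mulr_gt0 // expR_gt0. Qed.
Let p2_pos t : 0 <= t <= T -> 0 < p2 t.
Proof. by move=> /E2 ->; rewrite mulr_gt0 // expR_gt0. Qed.

Let F1_ge0 t : 0 <= t <= T -> 0 <= F1 t.
Proof.
move=> tT; rewrite /F1 /f1; apply: (my_Fpos I1) => // s sT.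
have [a0 /andP[b0 _]] := Hab sT.
apply: addr_ge0; first exact: ltW.
apply: mulr_ge0; first exact: ltW.
by apply/ltW/p1_pos; case/andP: sT => s0 ->; rewrite ltW.
Qed.

Let p1_le t : 0 <= t <= T -> p1 t <= g1.
Proof.
move=> tT; rewrite E1 // -[leRHS]mulr1; apply: ler_wpM2l; first exact: ltW.
by rewrite expR_le1 oppr_le0; exact: F1_ge0.
Qed.

Let pexp1 t : 0 <= t <= T -> p1 t = expR (ln g1 - F1 t).
Proof. by move=> tT; rewrite E1 // expRD lnK. Qed.
Let pexp2 t : 0 <= t <= T -> p2 t = expR (ln g2 - F2 t).
Proof. by move=> tT; rewrite E2 // expRD lnK. Qed.

Let L t := (ln g1 - F1 t) - (ln g2 - F2 t).

Let le_iff t : 0 <= t <= T -> (p1 t <= p2 t) = (L t <= 0).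
Proof. by move=> tT; rewrite pexp1 // pexp2 // ler_expR subr_le0. Qed.

Let Dle t : 0 <= t <= T -> p1 t - p2 t <= p1 t * L t.
Proof.
move=> tT; rewrite pexp1 // pexp2 //.
have -> : ln g2 - F2 t = (ln g1 - F1 t) + - L t by rewrite /L; lra.
rewrite (expRD (ln g1 - F1 t) (- L t)); have := expR_ge1Dx (- L t).
have := expR_gt0 (ln g1 - F1 t); nra.
Qed.

Let Ldiff r t0 : 0 <= r -> r <= t0 -> t0 <= T ->
  L r - L t0 = Rintegral mu `]r, t0] (fun s => b s * (p1 s - p2 s)).
Proof.
move=> r0 rt tT.
have -> : L r - L t0 = (F1 t0 - F1 r) - (F2 t0 - F2 r) by rewrite /L; lra.
rewrite /F1 /F2 (my_Fsplit I1) // (my_Fsplit I2) // -RintegralB //.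
- by apply: eq_Rintegral => s _; rewrite /f1 /f2; ring.
- apply: (my_intS I1) => // s /=; rewrite !in_itv /= => /andP[s0 st].
  by rewrite (ltW (le_lt_trans r0 s0)) (le_trans st tT).
- apply: (my_intS I2) => // s /=; rewrite !in_itv /= => /andP[s0 st].
  by rewrite (ltW (le_lt_trans r0 s0)) (le_trans st tT).
Qed.


Let p_at0 : p1 0 = g1 /\ p2 0 = g2.
Proof.
have h0 : (0:R) <= 0 <= T by rewrite lexx T0.
by rewrite E1 // E2 // !my_F0 oppr0 expR0 !mulr1.
Qed.

Lemma An_main t : 0 <= t <= T -> p2 t < p1 t.
Proof.
move=> tT; rewrite ltNge; apply/negP => bad.
pose B := [set s | 0 <= s <= T /\ p1 s <= p2 s].
have Bt : B t by [].
have lbB : has_lbound B by exists 0 => s [/andP[]].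
pose K := g1 * Mb.
have K0 : 0 < K by rewrite mulr_gt0.
pose h := (2 * K)^-1.
have h0 : 0 < h by rewrite invr_gt0 mulr_gt0.
have Kh : K * h = 2^-1 by rewrite /h invfM mulrCA divff ?gt_eqF // mulr1.
pose ts := inf B.
have [t0 Bt0 t0lt] : exists2 t0, B t0 & t0 < ts + h / 2.
  by apply: inf_lt; [exists t | rewrite ltrDl divr_gt0].
case: Bt0 => /andP[t00 t0T] bad0.
pose W := [set r | 0 <= r <= t0 /\ t0 - h <= r].
have WT r : W r -> 0 <= r <= T.
  by case=> /andP[r0 rt] _; rewrite r0 (le_trans rt t0T).
pose Dp r := Num.max (p1 r - p2 r) 0.
pose Ms := sup (Dp @` W).
have Wt0 : W t0 by split; [rewrite t00 lexx | rewrite lerBlDr lerDl ltW].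
have neW : (Dp @` W) !=set0 by exists (Dp t0); exists t0.
have ubW : has_ubound (Dp @` W).
  exists g1 => _ [r Wr <-]; rewrite /Dp ge_max (ltW g10) andbT.
  have := p1_le (WT _ Wr); have := p2_pos (WT _ Wr); lra.
have DpMs r : W r -> Dp r <= Ms by move=> Wr; apply: ub_le_sup => //; exists r.
have Ms0 : 0 <= Ms by apply: le_trans (DpMs _ Wt0); rewrite /Dp le_max lexx orbT.
have key r : W r -> Dp r <= Ms / 2.
  move=> Wr; have rT := WT _ Wr.
  rewrite /Dp ge_max divr_ge0 ?Ms0 // andbT.
  apply: le_trans (Dle rT) _.
  have [Lr0|Lr0] := leP (L r) 0.
    apply: le_trans (divr_ge0 Ms0 (ler0n _ 2)).
    by rewrite mulr_ge0_le0 // ltW // p1_pos.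
  have Lt00 : L t0 <= 0 by rewrite -le_iff // t00 t0T.
  case: Wr => /andP[r0 rt0] hr.
  have hL := Ldiff r0 rt0 t0T.
  have Ib : mu.-integrable `]r, t0] (EFin \o (fun s => b s * (p1 s - p2 s))).
    have -> : (fun s => b s * (p1 s - p2 s)) = (fun s => f1 s - f2 s).
      by apply: funext => s; rewrite /f1 /f2; ring.
    have -> : EFin \o (fun s => f1 s - f2 s) = ((EFin \o f1) \- (EFin \o f2))%E.
      by apply: funext => s; rewrite /= EFinB.
    apply: integrableB => //.
    - apply: (my_intS I1) => // s /=; rewrite !in_itv /= => /andP[s0 st].
      by rewrite (ltW (le_lt_trans r0 s0)) (le_trans st t0T).
    - apply: (my_intS I2) => // s /=; rewrite !in_itv /= => /andP[s0 st].
      by rewrite (ltW (le_lt_trans r0 s0)) (le_trans st t0T).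
  have hI := my_Rint_le_cst (C := Mb * Ms) rt0 Ib.
  have hI' : Rintegral mu `]r, t0] (fun s => b s * (p1 s - p2 s)) <= Mb * Ms * (t0 - r).
    apply: hI => s /andP[rs st].
    have Ws : W s.
      split; first by rewrite (ltW (le_lt_trans r0 rs)) st.
      exact: le_trans hr (ltW rs).
    have sT : 0 < s <= T by rewrite (le_lt_trans r0 rs) (le_trans st t0T).
    have [_ /andP[bs0 bsM]] := Hab sT.
    have DpD : p1 s - p2 s <= Dp s by rewrite /Dp le_max lexx.
    have Dp0 : 0 <= Dp s by rewrite /Dp le_max lexx orbT.
    apply: le_trans (ler_wpM2l (ltW bs0) DpD) _.
    exact: ler_pM (ltW bs0) Dp0 bsM (DpMs _ Ws).
  have p1r := p1_le rT.
  have p1r0 := p1_pos rT.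
  have step1 : p1 r * L r <= g1 * (Mb * Ms * (t0 - r)).
    apply: le_trans (ler_wpM2r (ltW Lr0) p1r) _.
    apply: ler_wpM2l; first exact: ltW.
    lra.
  apply: le_trans step1 _.
  have : t0 - r <= h by lra.
  have : 0 <= K * Ms by rewrite mulr_ge0 // ltW.
  rewrite -Kh /K; nra.
have Ms_le : Ms <= Ms / 2.
  by apply: ge_sup => // _ [r Wr <-]; exact: key.
have Ms00 : Ms <= 0 by lra.
have Wneg r : W r -> p1 r <= p2 r.
  move=> Wr; have := le_trans (DpMs _ Wr) Ms00.
  by rewrite /Dp ge_max subr_le0 => /andP[].
have [th0|th0] := leP (t0 - h) 0.
  have W0 : W 0 by split; [rewrite lexx t00 | exact: th0].
  have := Wneg _ W0; case: p_at0 => -> ->.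
  by move=> /(lt_le_trans g21); rewrite ltxx.
have Wr : W (t0 - h) by split; [rewrite (ltW th0) lerBlDr lerDl ltW | exact: lexx].
have Br : B (t0 - h) by split; [exact: WT | exact: Wneg].
have := ge_inf lbB Br; rewrite -/ts; lra.
Qed.
End An2.

End Helpers.
Import Helpers.

Theorem lemma3p1 (R : realType) (d : nat) (Om : set 'rV[R]_d)
  (sa sb g1 g2 : 'rV[R]_d -> R) (x v' : 'rV[R]_d) (phi1 phi2 : R -> R) :
  bounded_set Om -> convex_set Om ->
  bdd_pos_on Om sa -> bdd_pos_on Om sb ->
  on_sphere v' -> Om x ->
  (forall y, boundary Om y -> g2 y > 0) ->
  (forall y, boundary Om y -> g1 y > g2 y) ->
  let T := tau_minus Om x v' in
  let x' := x - T *: v' in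
  let sa_t := fun s : R => sa (x' + s *: v') in
  let sb_t := fun s : R => sb (x' + s *: v') in
  (* the integrands are Lebesgue integrable on [0, T], so the equations make sense *)
  (lebesgue_measure).-integrable `[0, T] (fun s => (sa_t s + sb_t s * phi1 s)%:E) ->
  (lebesgue_measure).-integrable `[0, T] (fun s => (sa_t s + sb_t s * phi2 s)%:E) ->
  (forall t, 0 <= t <= T -> phi1 t = g1 x' *
      expR (- Rintegral lebesgue_measure `[0, t] (fun s => sa_t s + sb_t s * phi1 s))) ->
  (forall t, 0 <= t <= T -> phi2 t = g2 x' *
      expR (- Rintegral lebesgue_measure `[0, t] (fun s => sa_t s + sb_t s * phi2 s))) ->
  forall t, 0 <= t <= T -> phi1 t > phi2 t.
Proof.
move=> Hb Hc [Ma Hsa] [Mb Hsb] Hv Hx H2 H12 T x' sa_t sb_t I1 I2 E1 E2 t tT.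
have T0 : 0 <= T by apply: ub_le_sup; [exact: S_ub | exact: S0].
have Hx' : boundary Om x' by exact: bnd.
have Mb0 : 0 < Mb by have /andP[h1 h2] := Hsb x Hx; exact: lt_le_trans h2.
have Hab : forall s, 0 < s <= T -> 0 < sa_t s /\ 0 < sb_t s <= Mb.
  move=> s /andP[s0 sT].
  have Om_s : Om (x' + s *: v').
    have -> : x' + s *: v' = x - (T - s) *: v'.
      by rewrite /x' scalerBl opprB addrA addrAC.
    apply: inner => //; apply/andP; split; first by rewrite subr_ge0.
    by rewrite ltrBlDr ltrDl.
  split; first by have /andP[] := Hsa _ Om_s.
  exact: Hsb.
exact: (An_main T0 (H2 _ Hx') (H12 _ Hx') Mb0 Hab I1 I2 E1 E2 tT).
Qed.
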